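(* Let $p$ be an odd prime. A metric $p$-group $(A,q)$ is reductive if and only if it is either isotropically generated or anisotropic.
   Context: $k$ is algebraically closed of characteristic $0$. A metric group $(A,q)$ is a finite Abelian group with a non-degenerate quadratic form $q:A\to k^\times$; a metric $p$-group if $A$ is a $p$-group. $x$ is isotropic if $q(x)=1$, a subgroup $H$ is isotropic if $q|_H=1$; $(A,q)$ is isotropically generated if $A$ is generated by isotropic elements; anisotropic if $q(x)\ne1$ for $x\ne0$; reductive if the intersection of its maximal isotropic subgroups is trivial. *)

(* Defs.v *)
From HB Require Import structures.
From mathcomp Require Import all_boot all_order all_algebra all_fingroup all_solvable.
Set Implicit Arguments. Unset Strict Implicit. Unset Printing Implicit Defensive.
Import GRing.Theory.

(* A finite abelian group is modelled as a subgroup A of a finGroupType gT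
   (written multiplicatively), and q : gT -> k, only its values on A matter. *)

Local Open Scope ring_scope.

Definition bichar (gT : finGroupType) (k : fieldType) (q : gT -> k) (x y : gT) : k :=
  q (x * y)%g / (q x * q y).

(* q : A -> k^x is a quadratic form: nonzero values, q(x^-1) = q(x),
   and b is a bicharacter (multiplicative in each variable; it is symmetric
   as A is abelian). *)
Definition quadratic_form (gT : finGroupType) (k : fieldType)
  (A : {group gT}) (q : gT -> k) : Prop :=
  [/\ {in A, forall x, q x != 0%R},
      {in A, forall x, q (x^-1)%g = q x},
      {in A & A & A, forall x y z, bichar q (x * y)%g z = (bichar q x z * bichar q y z)%R} &
      {in A & A & A, forall x y z, bichar q x (y * z)%g = (bichar q x y * bichar q x z)%R}].

Definition nondegenerate (gT : finGroupType) (k : fieldType)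
  (A : {group gT}) (q : gT -> k) : Prop :=
  {in A, forall x, {in A, forall y, bichar q x y = 1%R} -> x = 1%g}.

Definition metric_group (gT : finGroupType) (k : fieldType)
  (A : {group gT}) (q : gT -> k) : Prop :=
  [/\ abelian A, quadratic_form A q & nondegenerate A q].

Definition isotropic_subgroup (gT : finGroupType) (k : fieldType)
  (A : {group gT}) (q : gT -> k) (H : {group gT}) : bool :=
  (H \subset A) && [forall x in H, q x == 1%R].

Definition reductive (gT : finGroupType) (k : fieldType)
  (A : {group gT}) (q : gT -> k) : Prop :=
  \bigcap_(H : {group gT} | maxgroup H (isotropic_subgroup A q)) (H : {set gT}) = 1%g.

Definition isotropically_generated (gT : finGroupType) (k : fieldType)
  (A : {group gT}) (q : gT -> k) : Prop :=
  <<[set x in A | q x == 1%R]>>%g = A.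

Definition anisotropic (gT : finGroupType) (k : fieldType)
  (A : {group gT}) (q : gT -> k) : Prop :=
  {in A, forall x, q x = 1%R -> x = 1%g}.

(* Main.v *)
Require Import Defs.
From HB Require Import structures.
From mathcomp Require Import all_boot all_order all_algebra all_fingroup all_solvable.
From mathcomp Require Import zify.
Set Implicit Arguments. Unset Strict Implicit. Unset Printing Implicit Defensive.
Import GRing.Theory.
Local Open Scope ring_scope.

Section Basics.
Variables (k : fieldType) (gT : finGroupType) (A : {group gT}) (q : gT -> k).
Hypothesis hab : abelian A.
Hypothesis hq : quadratic_form A q.
Local Notation b := (bichar q).

Lemma qnz x : x \in A -> q x != 0.
Proof. by case: hq => h _ _ _; apply: h. Qed.
Lemma qV x : x \in A -> q (x^-1)%g = q x.
Proof. by case: hq => _ h _ _; apply: h. Qed.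
Lemma bMl x y z : x \in A -> y \in A -> z \in A -> b (x * y)%g z = b x z * b y z.
Proof. by case: hq => _ _ h _; apply: h. Qed.
Lemma bMr x y z : x \in A -> y \in A -> z \in A -> b x (y * z)%g = b x y * b x z.
Proof. by case: hq => _ _ _ h; apply: h. Qed.
Lemma bnz x y : x \in A -> y \in A -> b x y != 0.
Proof.
move=> hx hy; rewrite /bichar mulf_neq0 ?invr_eq0 ?mulf_neq0 ?qnz ?groupM //.
Qed.
Lemma bqE x y : x \in A -> y \in A -> q (x * y)%g = q x * q y * b x y.
Proof.
move=> hx hy; rewrite /bichar mulrC divfK // mulf_neq0 ?qnz //.
Qed.
Lemma b1l y : y \in A -> b 1%g y = 1.
Proof.
move=> hy; have := bMl (group1 A) (group1 A) hy; rewrite mulg1 => h.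
apply: (mulfI (bnz (group1 A) hy)); by rewrite mulr1 -h.
Qed.
Lemma b1r x : x \in A -> b x 1%g = 1.
Proof.
move=> hx; have := bMr hx (group1 A) (group1 A); rewrite mulg1 => h.
apply: (mulfI (bnz hx (group1 A))); by rewrite mulr1 -h.
Qed.
Lemma q1 : q 1%g = 1.
Proof.
have := b1l (group1 A); rewrite /bichar mulg1 invfM mulrA divff ?qnz // mul1r.
by move/eqP; rewrite invr_eq1 => /eqP.
Qed.
Lemma bC x y : x \in A -> y \in A -> b x y = b y x.
Proof.
move=> hx hy; have cxy : commute x y by apply: (centsP hab).
by rewrite /bichar cxy (mulrC (q x)).
Qed.
Lemma bVl x y : x \in A -> y \in A -> b (x^-1)%g y = (b x y)^-1.
Proof.
move=> hx hy; apply: (mulIf (bnz hx hy)).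
by rewrite mulVf ?bnz // -bMl ?groupV // mulVg b1l.
Qed.
Lemma bXl x y n : x \in A -> y \in A -> b (x ^+ n)%g y = b x y ^+ n.
Proof.
move=> hx hy; elim: n => [|n IH]; first by rewrite expg0 b1l.
by rewrite expgS bMl ?groupX // IH exprS.
Qed.
Lemma bXr x y n : x \in A -> y \in A -> b x (y ^+ n)%g = b x y ^+ n.
Proof.
move=> hx hy; elim: n => [|n IH]; first by rewrite expg0 b1r.
by rewrite expgS bMr ?groupX // IH exprS.
Qed.
Lemma bxx x : x \in A -> b x x = q x ^+ 2.
Proof.
move=> hx.
have h : b x x * b x (x^-1)%g = 1 by rewrite -bMr ?groupV // mulgV b1r.
have e : b x (x^-1)%g = (q x ^+ 2)^-1 by rewrite /bichar mulgV q1 qV // mul1r expr2.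
rewrite e in h; have := congr1 (fun z => z * q x ^+ 2) h.
by rewrite mul1r -mulrA mulVf ?expf_neq0 ?qnz // mulr1.
Qed.
Lemma qX x n : x \in A -> q (x ^+ n)%g = q x ^+ (n * n).
Proof.
move=> hx; elim: n => [|n IH]; first by rewrite expg0 q1 expr0.
rewrite expgSr bqE ?groupX // IH bXl // bxx // -exprM -exprSr -exprD.
congr (_ ^+ _); lia.
Qed.
Lemma q_order x : x \in A -> odd #[x]%g -> q x ^+ #[x]%g = 1.
Proof.
move=> hx hodd; set n := #[x]%g.
have h1 : q x ^+ (n * n) = 1 by rewrite -qX // expg_order q1.
have h2 : q x ^+ (2 * n) = 1 by rewrite exprM -bxx // -bXl // expg_order b1l.
have e : (n * n + n = (2 * n) * (n./2).+1)%N.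
  have := odd_double_half n; rewrite hodd -!muln2; lia.
by rewrite -[q x ^+ n]mul1r -{1}h1 -exprD e exprM h2 expr1n.
Qed.
Lemma perp_group x : x \in A -> group_set [set y in A | b x y == 1].
Proof.
move=> hx; apply/group_setP; split; first by rewrite inE group1 (b1r hx) eqxx.
move=> y z; rewrite !inE => /andP[hy /eqP ey] /andP[hz /eqP ez].
by rewrite groupM // bMr // ey ez mulr1 eqxx.
Qed.
Lemma perp_gen x (S : {set gT}) : x \in A -> S \subset A ->
  {in S, forall y, b x y = 1} -> {in <<S>>%g, forall y, b x y = 1}.
Proof.
move=> hx sSA hS y hy.
have sub : (<<S>> \subset Group (perp_group hx))%g.
  rewrite gen_subG; apply/subsetP => z hz; rewrite inE (subsetP sSA) //= hS //.
have := subsetP sub y hy; by rewrite inE => /andP[_ /eqP].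
Qed.
Lemma char_sum (G : {group gT}) (psi : gT -> k) :
  {in G &, forall x y, psi (x * y)%g = psi x * psi y} ->
  \sum_(u in G) psi u != 0 -> {in G, forall w, psi w = 1}.
Proof.
move=> hm hs w hw.
have e : \sum_(u in G) psi u = psi w * \sum_(u in G) psi u.
  rewrite mulr_sumr (reindex_inj (mulgI w)) /=.
  apply: eq_big => u; first by rewrite groupMl.
  by move=> hu; rewrite hm // -(groupMl _ hw).
apply: (mulIf hs); by rewrite mul1r -e.
Qed.
Lemma isoP (L : {group gT}) : isotropic_subgroup A q L ->
  L \subset A /\ {in L, forall x, q x = 1}.
Proof.
case/andP => hL /forall_inP h; split => // x hx; exact/eqP/h.
Qed.
Lemma iso_cycle y : y \in A -> q y = 1 -> isotropic_subgroup A q <[y]>%G.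
Proof.
move=> hy qy; rewrite /isotropic_subgroup cycle_subG hy /=.
apply/forall_inP => x /cycleP[i ->]; by rewrite qX // qy expr1n.
Qed.
Lemma iso1 : isotropic_subgroup A q 1%G.
Proof.
rewrite /isotropic_subgroup sub1G /=; apply/forall_inP => x.
by rewrite inE => /eqP ->; rewrite q1.
Qed.
End Basics.

Section Main.
Variables (k : fieldType) (gT : finGroupType) (A : {group gT}) (q : gT -> k).
Hypothesis hab : abelian A.
Hypothesis hq : quadratic_form A q.
Local Notation b := (bichar q).

Lemma red_crit :
  (forall z, (forall L : {group gT}, maxgroup L (isotropic_subgroup A q) -> z \in L) -> z = 1%g) ->
  reductive A q.
Proof.
move=> h; apply/eqP; rewrite eqEsubset; apply/andP; split.
  apply/subsetP => z hz; rewrite inE; apply/eqP; apply: h => L hL.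
  exact: (bigcapP hz).
apply/subsetP => z; rewrite inE => /eqP ->; apply/bigcapP => L _; exact: group1.
Qed.

Lemma red_iso : Defs.nondegenerate A q -> isotropically_generated A q -> reductive A q.
Proof.
move=> hnd hgen; apply: red_crit => z hz.
have [L0 maxL0 _] := maxgroup_exists (iso1 hq).
have [isoL0 _] := maxgroupP maxL0.
have [sL0 _] := isoP isoL0.
have zA : z \in A := subsetP sL0 z (hz L0 maxL0).
apply: (hnd _ zA) => y hy.
have : y \in <<[set x in A | q x == 1%R]>>%g by rewrite hgen.
move=> hyS; apply: (perp_gen hq zA _ _ hyS); first by apply/subsetP => x; rewrite inE => /andP[].
move=> x; rewrite inE => /andP[xA /eqP qx].
have [L maxL sub] := maxgroup_exists (iso_cycle hab hq xA qx).
have [isoL _] := maxgroupP maxL; have [_ qL] := isoP isoL.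
have xL : x \in L := subsetP sub x (cycle_id x).
have zL := hz L maxL.
by rewrite /bichar qL ?groupM // qL // qL // mulr1 invr1 mulr1.
Qed.

Lemma red_aniso : anisotropic A q -> reductive A q.
Proof.
move=> han; apply: red_crit => z hz.
have [L0 maxL0 _] := maxgroup_exists (iso1 hq).
have [isoL0 _] := maxgroupP maxL0.
have [sL0 qL0] := isoP isoL0.
have zL := hz L0 maxL0.
exact: han (subsetP sL0 z zL) (qL0 z zL).
Qed.

Variable p : nat.
Hypothesis hk : [pchar k]%R =i pred0.
Hypothesis hp : prime p.
Hypothesis hodd : odd p.
Hypothesis hpA : (p.-group A)%g.

Lemma main_dir : reductive A q ->
  (exists2 x, x \in A & (q x = 1 /\ x != 1%g)) -> isotropically_generated A q.
Proof.
move=> hred [x xA [qx xn1]].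
set iso := [set x in A | q x == 1].
have isoA : iso \subset A by apply/subsetP => y; rewrite inE => /andP[].
have A0A : <<iso>>%g \subset A by rewrite gen_subG.
have memA0 y : y \in A -> q y = 1 -> y \in <<iso>>%g.
  by move=> yA qy; apply: mem_gen; rewrite inE yA qy eqxx.
have oddo y : y \in A -> odd #[y]%g.
  by move=> yA; have /p_natP[e ->] := mem_p_elt hpA yA; rewrite oddX hodd orbT.
have H0 : forall z, z \in <<iso>>%g -> {in <<iso>>%g, forall u, b z u = 1} -> z = 1%g.
  move=> z zA0 hz; have zA := subsetP A0A z zA0.
  have qz2 : q z ^+ 2 = 1 by rewrite -(bxx hq zA) hz.
  have qz1 : q z = 1.
    have := q_order hab hq zA (oddo z zA).
    have := odd_double_half #[z]%g; rewrite oddo // => <-.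
    by rewrite exprD expr1 -mul2n exprM qz2 expr1n mulr1.
  have : z \in (1%g : {set gT}).
    rewrite -hred; apply/bigcapP => L maxL.
    have [isoL maxP] := maxgroupP maxL; have [sLA qL] := isoP isoL.
    have cLz : <[z]>%g \subset 'C(L)%g.
      by apply: sub_abelian_cent2 hab _ sLA; rewrite cycle_subG.
    have isoJ : isotropic_subgroup A q (L <*> <[z]>)%G.
      rewrite /isotropic_subgroup join_subG sLA cycle_subG zA /=.
      apply/forall_inP => y; rewrite cent_joinEr // => /mulsgP[l w lL /cycleP[i ->] ->].
      have lA := subsetP sLA l lL.
      rewrite (bqE hq) ?groupX // qL // (qX hab hq) // qz1 expr1n (bXr hq) // (bC q hab) // hz ?memA0 ?qL //.
      by rewrite !expr1n !mulr1.
    have eJ := maxP _ isoJ (joing_subl _ _).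
    have : z \in (L <*> <[z]>)%G := subsetP (joing_subr L <[z]>%g) z (cycle_id z).
    by rewrite eJ.
  by rewrite inE => /eqP.
apply/eqP; rewrite eqEsubset A0A /=; apply/subsetP => a aA.
set S := fun v => \sum_(u in <<iso>>%g) b a u * (b v u)^-1.
have hsum : \sum_(v in <<iso>>%g) S v = #|<<iso>>%g|%:R.
  rewrite /S exchange_big /= (bigD1 1%g) ?group1 //= [X in _ + X]big1 ?addr0.
    rewrite (eq_bigr (fun _ => 1)); first by rewrite sumr_const.
    move=> v vA0; have vA := subsetP A0A v vA0; rewrite !(b1r hq) //; exact: divr1.
  move=> u /andP[uA0 un1].
  rewrite -mulr_sumr; apply/eqP; rewrite mulf_eq0; apply/orP; right.
  apply/negPn/negP => hs.
  have uA := subsetP A0A u uA0.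
  have h1 : {in <<iso>>%g, forall w, (b w u)^-1 = 1}.
    apply: (char_sum _ hs) => v w1 vA0 w1A0 /=.
    have vA := subsetP A0A v vA0; have w1A := subsetP A0A w1 w1A0.
    by rewrite (bMl hq) // invfM.
  apply: (negP un1); apply/eqP; apply: (H0 _ uA0) => w wA0.
  have wA := subsetP A0A w wA0.
  have := h1 _ wA0; move/eqP; rewrite invr_eq1 => /eqP.
  by rewrite (bC q hab).
have n0 : (#|<<iso>>%g|%:R : k) != 0.
  by have /pcharf0P -> := hk; rewrite -lt0n cardG_gt0.
have [v vA0 Sv] : exists2 v, v \in <<iso>>%g & S v != 0.
  apply/exists_inP; apply: (contraR _ n0) => /exists_inPn hn.
  by rewrite -hsum big1 // => w wA0; apply/eqP/negPn/hn.
have vA := subsetP A0A v vA0.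
have hv : {in <<iso>>%g, forall w, b a w * (b v w)^-1 = 1}.
  apply: (char_sum _ Sv) => w1 w2 h1 h2 /=.
  have := subsetP A0A w1 h1; have := subsetP A0A w2 h2; move=> ? ?.
  by rewrite !(bMr hq) // invfM mulrACA.
set c := (a * v^-1)%g.
have cA : c \in A by rewrite groupM ?groupV.
have cperp : {in <<iso>>%g, forall w, b c w = 1}.
  move=> w wA0; have wA := subsetP A0A w wA0.
  by rewrite (bMl hq) ?groupV // (bVl hq) // hv.
have cp : (#[c]%g %| p)%N.
  have /p_natP[e oe] := mem_p_elt hpA cA.
  case: e oe => [|[|e]] oe; rewrite oe ?dvd1n ?expn1 ?dvdnn //.
  exfalso; set w := (c ^+ (p ^ e.+1))%g.
  have wA : w \in A by rewrite groupX.
  have qw : q w = 1.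
    rewrite /w (qX hab hq) //; have := q_order hab hq cA (oddo c cA); rewrite oe => h.
    have : (p ^ e.+2 %| p ^ e.+1 * p ^ e.+1)%N.
      rewrite -expnD dvdn_Pexp2l ?prime_gt1 //; by rewrite -[X in (X < _)%N]addn0 ltn_add2l.
    by case/dvdnP => m ->; rewrite mulnC exprM h expr1n.
  have w1 : w = 1%g.
    apply: (H0 _ (memA0 w wA qw)) => u uA0.
    have uA := subsetP A0A u uA0; by rewrite (bXl hq) // cperp // expr1n.
  have : (#[c]%g %| p ^ e.+1)%N by rewrite order_dvdn; apply/eqP; exact: w1.
  rewrite oe dvdn_Pexp2l ?prime_gt1 //; by rewrite ltnn.
have qcp : q c ^+ p = 1.
  by case/dvdnP: cp => m hm; rewrite hm mulnC exprM (q_order hab hq cA (oddo c cA)) expr1n.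
have /p_natP[e oex] := mem_p_elt hpA xA.
case: e oex => [|e] oex.
  by move: xn1; rewrite -order_eq1 oex expn0 eqxx.
set x1 := (x ^+ (p ^ e))%g.
have x1A : x1 \in A by rewrite groupX.
have qx1 : q x1 = 1 by rewrite (qX hab hq) // qx expr1n.
have x1p : (x1 ^+ p = 1)%g by rewrite -expgM -expnSr -oex expg_order.
have x1n1 : x1 != 1%g.
  apply/eqP => h; have : (#[x]%g %| p ^ e)%N by rewrite order_dvdn; apply/eqP.
  rewrite oex dvdn_Pexp2l ?prime_gt1 //; by rewrite ltnn.
have [y yiso bn1] : exists2 y, y \in iso & b x1 y != 1.
  apply/exists_inP; apply: (contraR _ x1n1) => /exists_inPn hn; apply/eqP.
  apply: (H0 _ (memA0 _ x1A qx1)).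
  apply: (perp_gen hq x1A isoA) => y yi; apply/eqP; exact/negPn/hn.
move: yiso; rewrite inE => /andP[yA /eqP qy].
set z := b x1 y.
have zp : z ^+ p = 1 by rewrite /z -(bXl hq) // x1p (b1l hq).
have [m pm mp] := prim_order_exists (prime_gt0 hp) zp.
have pz : primitive_root_of_unity p z.
  case/primeP: hp => _ /(_ m mp) /orP[] /eqP em; last by rewrite -em.
  exfalso; rewrite em in pm; have := prim_expr_order pm; rewrite expr1 => h.
  by move: bn1; rewrite -/z h eqxx.
have : (q c)^-1 ^+ p = 1 by rewrite exprVn qcp invr1.
case/(prim_rootP pz) => i hi.
set u := (x1 ^+ i * y)%g.
have uA : u \in A by rewrite groupM ?groupX.
have qu : q u = (q c)^-1.
  by rewrite /u (bqE hq) ?groupX // (qX hab hq) // qx1 expr1n qy !mul1r (bXl hq) // -/z hi.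
have uA0 : u \in <<iso>>%g by rewrite groupM ?groupX ?memA0.
have cu : (c * u)%g \in <<iso>>%g.
  apply: memA0; first by rewrite groupM.
  by rewrite (bqE hq) // qu cperp // mulr1 mulfV // (qnz hq).
have cA0 : c \in <<iso>>%g by rewrite -(groupMr c uA0).
by rewrite -(mulgKV v a) groupM.
Qed.
End Main.

Theorem proposition6p7 (k : closedFieldType) (hk : [pchar k]%R =i pred0)
  (p : nat) (hp : prime p) (hodd : odd p)
  (gT : finGroupType) (A : {group gT}) (q : gT -> k)
  (hmet : metric_group A q) (hpA : (p.-group A)%g) :
  reductive A q <-> isotropically_generated A q \/ anisotropic A q.
Proof.
case: hmet => hab hq hnd; split.
  move=> hred.
  case: (boolP [exists x in A, (q x == 1) && (x != 1%g)]) =>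
      [/exists_inP[x xA /andP[/eqP qx xn1]] | /exists_inPn hn].
    by left; apply: (main_dir hab hq hk hp hodd hpA hred); exists x.
  right => x xA qx; apply/eqP; move: (hn x xA); by rewrite qx eqxx /= negbK.
by case => [hg|han]; [apply: red_iso | apply: red_aniso].
Qed.
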